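(* Let $X$ be a complex Banach space, $\mathcal{F}$ an algebra with unit, $\mathcal{E}\subseteq\mathcal{F}$ a (not necessarily unital) subalgebra, and $\Phi:\mathcal{E}\to\mathcal{L}(X)$ an algebra homomorphism such that $\mathcal{F}$ is anchored in $\mathcal{E}$. Then there is a unique calculus $\widehat{\Phi}:\mathcal{F}\to\mathcal{C}(X)$ such that $\widehat{\Phi}|_{\mathcal{E}}=\Phi$.
   Context: $\mathcal{F}$ need not be commutative. $\mathcal{L}(X)$, $\mathcal{C}(X)$: bounded, resp. closed linear operators on $X$; operator inclusions are graph inclusions, sums/products have natural domains, ''$Tx=y$'' means $x\in\mathrm{dom}(T)$, $Tx=y$. For $f\in\mathcal{F}$, $[f]_{\mathcal{E}}=\{e\in\mathcal{E}: ef\in\mathcal{E}\}$; $f$ is anchored in $\mathcal{E}$ (w.r.t. $\Phi$) if $[f]_{\mathcal{E}}\neq\emptyset$ and $\bigcap_{e\in[f]_{\mathcal{E}}}\ker\Phi(e)=\{0\}$; $\mathcal{F}$ is anchored in $\mathcal{E}$ if every $f\in\mathcal{F}$ is. A proto-calculus is a map $\Psi:\mathcal{F}\to\mathcal{C}(X)$ with (FC1) $\Psi(\mathbf{1})=I$; (FC2) $\lambda\Psi(f)\subseteq\Psi(\lambda f)$, $\Psi(f)+\Psi(g)\subseteq\Psi(f+g)$; (FC3) $\Psi(f)\Psi(g)\subseteq\Psi(fg)$ with $\mathrm{dom}(\Psi(f)\Psi(g))=\mathrm{dom}(\Psi(g))\cap\mathrm{dom}(\Psi(fg))$. It is a calculus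 if in addition, with $\mathrm{bdd}=\{g:\Psi(g)\in\mathcal{L}(X)\}$ and $\mathrm{reg}(f,\Psi)=\{e: e,ef\in\mathrm{bdd}\}$, for every $f\in\mathcal{F}$ and $x,y\in X$: $\Psi(f)x=y\iff\Psi(ef)x=\Psi(e)y$ for all $e\in\mathrm{reg}(f,\Psi)$. *)

(* Defs.v *)
From HB Require Import structures.
From mathcomp Require Import all_boot all_order all_algebra.
From mathcomp Require Import complex.
From mathcomp Require Import all_classical all_reals topology normedtype.
Import numFieldNormedType.Exports.
Set Implicit Arguments. Unset Strict Implicit. Unset Printing Implicit Defensive.
Import GRing.Theory.
Local Open Scope ring_scope.
Local Open Scope classical_set_scope.

(* Operators on a space X are represented by their graphs (subsets of X*X).
   Operator inclusion = graph inclusion; sums / products / scalar multiples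
   carry their natural domains. *)
Definition op (X : Type) := set (X * X).

Section Operators.
Variables (K : numFieldType) (X : normedModType K).

Definition is_operator (T : op X) : Prop :=
  [/\ T (0, 0),
      (forall x y x' y', T (x, y) -> T (x', y') -> T (x + x', y + y')),
      (forall (a : K) x y, T (x, y) -> T (a *: x, a *: y))
    & (forall x y y', T (x, y) -> T (x, y') -> y = y')].

Definition dom (T : op X) : set X := [set x | exists y, T (x, y)].

Definition closed_op (T : op X) : Prop := is_operator T /\ closed T.

Definition bounded_op (T : op X) : Prop :=
  is_operator T /\
  exists g : X -> X, continuous g /\ (forall x y, T (x, y) <-> y = g x).

Definition op_id : op X := [set p | p.2 = p.1].
Definition op_scale (a : K) (T : op X) : op X :=
  [set p | exists y, T (p.1, y) /\ p.2 = a *: y].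
Definition op_add (T S : op X) : op X :=
  [set p | exists y z, T (p.1, y) /\ S (p.1, z) /\ p.2 = y + z].
(* op_mul T S = T S (first apply S, then T) *)
Definition op_mul (T S : op X) : op X :=
  [set p | exists y, S (p.1, y) /\ T (y, p.2)].

(* "T x = S y": x in dom T, y in dom S and T x = S y *)
Definition op_eq_app (T : op X) (x : X) (S : op X) (y : X) : Prop :=
  exists z, T (x, z) /\ S (y, z).
End Operators.

Section Calculus.
Variables (R : realType) (X : normedModType R[i]) (F : algType R[i]).

Definition is_subalgebra (E : set F) : Prop :=
  [/\ E 0,
      (forall e e', E e -> E e' -> E (e + e')),
      (forall (a : R[i]) e, E e -> E (a *: e))
    & (forall e e', E e -> E e' -> E (e * e'))].

(* Phi : E -> L(X) an algebra homomorphism (values outside E are irrelevant) *)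
Definition is_alg_hom_on (E : set F) (Phi : F -> op X) : Prop :=
  [/\ (forall e, E e -> bounded_op (Phi e)),
      (forall e e', E e -> E e' -> Phi (e + e') = op_add (Phi e) (Phi e')),
      (forall (a : R[i]) e, E e -> Phi (a *: e) = op_scale a (Phi e))
    & (forall e e', E e -> E e' -> Phi (e * e') = op_mul (Phi e) (Phi e'))].

(* [f]_E = { e in E : e f in E } *)
Definition regset (E : set F) (f : F) : set F := [set e | E e /\ E (e * f)].

Definition anchored (E : set F) (Phi : F -> op X) (f : F) : Prop :=
  (exists e, regset E f e) /\
  (forall x : X, (forall e, regset E f e -> Phi e (x, 0)) -> x = 0).

Definition F_anchored (E : set F) (Phi : F -> op X) : Prop :=
  forall f, anchored E Phi f.

Definition proto_calculus (Psi : F -> op X) : Prop :=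
  [/\ (forall f, closed_op (Psi f)),
      Psi 1 = @op_id _ X,
      (forall (a : R[i]) f, op_scale a (Psi f) `<=` Psi (a *: f)),
      (forall f g, op_add (Psi f) (Psi g) `<=` Psi (f + g))
    & (forall f g, op_mul (Psi f) (Psi g) `<=` Psi (f * g) /\
         dom (op_mul (Psi f) (Psi g)) = dom (Psi g) `&` dom (Psi (f * g)))].

Definition bdd (Psi : F -> op X) : set F := [set g | bounded_op (Psi g)].

Definition reg (f : F) (Psi : F -> op X) : set F :=
  [set e | bdd Psi e /\ bdd Psi (e * f)].

Definition calculus (Psi : F -> op X) : Prop :=
  proto_calculus Psi /\
  forall f (x y : X),
    Psi f (x, y) <->
    (forall e, reg f Psi e -> op_eq_app (Psi (e * f)) x (Psi e) y).
End Calculus.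

(* Main.v *)
Require Import Defs.
From HB Require Import structures.
From mathcomp Require Import all_boot all_order all_algebra.
From mathcomp Require Import complex.
From mathcomp Require Import all_classical all_reals topology normedtype.
Import numFieldNormedType.Exports.
Import GRing.Theory.
Set Implicit Arguments. Unset Strict Implicit. Unset Printing Implicit Defensive.
Local Open Scope ring_scope.
Local Open Scope classical_set_scope.

Definition fnop (K : numFieldType) (X : normedModType K) (T : op X) : X -> X :=
  match pselect (exists g : X -> X, continuous g /\ forall x y, T (x,y) <-> y = g x) with
  | left H => projT1 (cid H) | right _ => id end.

Lemma fnopP (K : numFieldType) (X : normedModType K) (T : op X) :
  bounded_op T -> continuous (fnop T) /\ forall x y, T (x,y) <-> y = fnop T x.
Proof. case=> _ ex; rewrite /fnop; case: pselect => [H|//]; by case: (cid H). Qed.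

Lemma fnopE (K : numFieldType) (X : normedModType K) (T : op X) (x : X) :
  bounded_op T -> T (x, fnop T x).
Proof. by move=> /fnopP[_ H]; apply/H. Qed.

Lemma fnop_eq (K : numFieldType) (X : normedModType K) (T : op X) (x y : X) :
  bounded_op T -> T (x, y) -> y = fnop T x.
Proof. by move=> /fnopP[_ H]; move/H. Qed.

Lemma fnopD (K : numFieldType) (X : normedModType K) (T : op X) (x x' : X) :
  bounded_op T -> fnop T (x + x') = fnop T x + fnop T x'.
Proof.
move=> bT; have [[_ add _ _] _] := bT; apply/esym/fnop_eq => //.
by apply: add; exact: fnopE.
Qed.

Lemma fnopZ (K : numFieldType) (X : normedModType K) (T : op X) (a : K) (x : X) :
  bounded_op T -> fnop T (a *: x) = a *: fnop T x.
Proof.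
move=> bT; have [[_ _ sc _] _] := bT; apply/esym/fnop_eq => //.
by apply: sc; exact: fnopE.
Qed.

Lemma fnop0 (K : numFieldType) (X : normedModType K) (T : op X) :
  bounded_op T -> fnop T 0 = 0.
Proof. move=> bT; have [[z _ _ _] _] := bT; apply/esym/fnop_eq => //. Qed.

Lemma fnopB (K : numFieldType) (X : normedModType K) (T : op X) (x y : X) :
  bounded_op T -> fnop T (x - y) = fnop T x - fnop T y.
Proof. by move=> bT; rewrite fnopD // -scaleN1r fnopZ // scaleN1r. Qed.

Lemma phiD (R : realType) (X : normedModType R[i]) (F : algType R[i]) (E : set F)
  (Phi : F -> op X) : is_subalgebra E -> is_alg_hom_on E Phi ->
  forall e e' (x : X), E e -> E e' ->
  fnop (Phi (e + e')) x = fnop (Phi e) x + fnop (Phi e') x.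
Proof.
move=> [_ sD sZ sM] [bd hD hZ hM] e e' x Ee Ee'.
apply/esym/fnop_eq; first exact/bd/sD.
rewrite hD //; exists (fnop (Phi e) x), (fnop (Phi e') x).
split; first by apply: fnopE; apply: bd.
split; first by apply: fnopE; apply: bd.
by [].
Qed.

Lemma phiZ (R : realType) (X : normedModType R[i]) (F : algType R[i]) (E : set F)
  (Phi : F -> op X) : is_subalgebra E -> is_alg_hom_on E Phi ->
  forall a e (x : X), E e ->
  fnop (Phi (a *: e)) x = a *: fnop (Phi e) x.
Proof.
move=> [_ sD sZ sM] [bd hD hZ hM] a e x Ee.
apply/esym/fnop_eq; first exact/bd/sZ.
rewrite hZ //; exists (fnop (Phi e) x); split => //; apply: fnopE; exact: bd.
Qed.

Lemma phiM (R : realType) (X : normedModType R[i]) (F : algType R[i]) (E : set F)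
  (Phi : F -> op X) : is_subalgebra E -> is_alg_hom_on E Phi ->
  forall e e' (x : X), E e -> E e' ->
  fnop (Phi (e * e')) x = fnop (Phi e) (fnop (Phi e') x).
Proof.
move=> [_ sD sZ sM] [bd hD hZ hM] e e' x Ee Ee'.
apply/esym/fnop_eq; first exact/bd/sM.
rewrite hM //; exists (fnop (Phi e') x); split; apply: fnopE; exact: bd.
Qed.

Lemma anch (R : realType) (X : normedModType R[i]) (F : algType R[i]) (E : set F)
  (Phi : F -> op X) : is_alg_hom_on E Phi -> F_anchored E Phi ->
  forall g (w : X), (forall d, E d -> E (d * g) -> fnop (Phi d) w = 0) -> w = 0.
Proof.
move=> [bd _ _ _] anc g w H; apply: (anc g).2 => d [Ed Edg].
have [_ P] := fnopP (bd _ Ed); apply/P; by rewrite H.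
Qed.

Lemma subE (R : realType) (F : algType R[i]) (E : set F) :
  is_subalgebra E -> forall e e', E e -> E e' -> E (e - e').
Proof.
move=> [_ sD sZ _] e e' Ee Ee'; apply: sD => //.
by rewrite -scaleN1r; apply: sZ.
Qed.

Definition Psi0 (R : realType) (X : normedModType R[i]) (F : algType R[i]) (E : set F)
  (Phi : F -> op X) (f : F) : op X :=
  fun p => forall e, E e -> E (e * f) -> fnop (Phi (e * f)) p.1 = fnop (Phi e) p.2.

Lemma core (R : realType) (X : normedModType R[i]) (F : algType R[i]) (E : set F)
  (Phi : F -> op X) : is_subalgebra E -> is_alg_hom_on E Phi -> F_anchored E Phi ->
  forall f e (x y u v : X),
  (forall c, E c -> E (c * f) -> fnop (Phi (c * f)) x = fnop (Phi c) y) ->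
  (forall d, E d -> E (d * (e * f)) -> fnop (Phi (d * (e * f))) x = fnop (Phi d) u) ->
  (forall d, E d -> E (d * e) -> fnop (Phi (d * e)) y = fnop (Phi d) v) ->
  u = v.
Proof.
move=> sub hom anc f e x y u v Hf Hu Hv.
have [s0 sD sZ sM] := sub; have [bd _ _ _] := hom.
apply/eqP; rewrite -subr_eq0; apply/eqP.
apply: (anch hom anc (g := e)) => d1 Ed1 Ed1e.
apply: (anch hom anc (g := d1 * e * f)) => d2 Ed2 Ed2f.
rewrite -(phiM sub hom) //.
have Ed : E (d2 * d1) by apply: sM.
have Ede : E (d2 * d1 * e) by rewrite -mulrA; apply: sM.
have Edef : E (d2 * d1 * e * f) by move: Ed2f; rewrite -!mulrA.
rewrite fnopB; last exact: bd.
rewrite -Hu; last by rewrite !mulrA.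
rewrite -Hv // mulrA Hf //.
rewrite subrr //. exact: Ed.
Qed.

Lemma calc_fwd (R : realType) (X : normedModType R[i]) (F : algType R[i]) (E : set F)
  (Phi : F -> op X) : is_subalgebra E -> is_alg_hom_on E Phi -> F_anchored E Phi ->
  forall Q : F -> op X,
  (forall g (x y : X), Q g (x, y) -> forall c, E c -> E (c * g) ->
      fnop (Phi (c * g)) x = fnop (Phi c) y) ->
  forall f (x y : X),
  (forall c, E c -> E (c * f) -> fnop (Phi (c * f)) x = fnop (Phi c) y) ->
  forall e, reg f Q e -> op_eq_app (Q (e * f)) x (Q e) y.
Proof.
move=> sub hom anc Q HQ f x y Hf e [be bef].
exists (fnop (Q (e * f)) x); split; first exact: fnopE.
have -> : fnop (Q (e * f)) x = fnop (Q e) y; last exact: fnopE.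
apply: (core sub hom anc Hf).
- move=> d Ed Edef; apply: HQ => //; exact: fnopE.
- move=> d Ed Ede; apply: HQ => //; exact: fnopE.
Qed.

Lemma Psi0_E (R : realType) (X : normedModType R[i]) (F : algType R[i]) (E : set F)
  (Phi : F -> op X) : is_subalgebra E -> is_alg_hom_on E Phi -> F_anchored E Phi ->
  forall f, E f -> Psi0 E Phi f = Phi f.
Proof.
move=> sub hom anc f Ef; have [s0 sD sZ sM] := sub; have [bd _ _ _] := hom.
apply/seteqP; split => -[x y] /=.
- move=> H; have [_ P] := fnopP (bd _ Ef); apply/P.
  apply/eqP; rewrite eq_sym -subr_eq0; apply/eqP.
  apply: (anch hom anc (g := f)) => d Ed Edf.
  move: H; rewrite /Psi0 /= => H.
  have bEd := bd _ Ed.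
  by rewrite fnopB // -(H d Ed Edf) (phiM sub hom x Ed Ef) subrr.
- move=> H; rewrite /Psi0 /= => e Ee Eef.
  rewrite (phiM sub hom) //; congr fnop.
  by apply/esym; exact: fnop_eq (bd _ Ef) H.
Qed.

Lemma Psi0_op (R : realType) (X : normedModType R[i]) (F : algType R[i]) (E : set F)
  (Phi : F -> op X) : is_subalgebra E -> is_alg_hom_on E Phi -> F_anchored E Phi ->
  forall f, closed_op (Psi0 E Phi f).
Proof.
move=> sub hom anc f; have [s0 sD sZ sM] := sub; have [bd _ _ _] := hom.
split; first split.
- rewrite /Psi0 /= => e Ee Eef; have b1 := bd _ Ee; have b2 := bd _ Eef.
  by rewrite !fnop0.
- rewrite /Psi0 /= => x y x' y' H H' e Ee Eef.
  have b1 := bd _ Ee; have b2 := bd _ Eef.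
  by rewrite !fnopD // H // H'.
- rewrite /Psi0 /= => a x y H e Ee Eef.
  have b1 := bd _ Ee; have b2 := bd _ Eef.
  by rewrite !fnopZ // H.
- rewrite /Psi0 /= => x y y' H H'.
  apply/eqP; rewrite -subr_eq0; apply/eqP.
  apply: (anch hom anc (g := f)) => d Ed Edf.
  have b1 := bd _ Ed; have b2 := bd _ Edf.
  by rewrite fnopB // -H // -H' // subrr.
have -> : Psi0 E Phi f = \bigcap_(e in regset E f)
   ((fun p : X * X => fnop (Phi (e * f)) p.1 - fnop (Phi e) p.2) @^-1` [set 0]).
  apply/seteqP; split => -[x y] /=.
  - move=> H e [Ee Eef] /=; by rewrite H // subrr.
  - move=> H e Ee Eef; apply/eqP; rewrite -subr_eq0; apply/eqP.
    exact: (H e (conj Ee Eef)).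
apply: closed_bigI => e [Ee Eef].
apply: preimage_closed; last first.
  exact: (@accessible_closed_set1 X (hausdorff_accessible (@norm_hausdorff _ X)) 0).
move=> p _.
have c1 := (fnopP (bd _ Eef)).1; have c2 := (fnopP (bd _ Ee)).1.
apply: (@continuousB _ _ _ (fun p : X * X => fnop (Phi (e * f)) p.1)
   (fun p : X * X => fnop (Phi e) p.2)).
- apply: continuous_comp; [exact: cvg_fst | exact: c1].
- apply: continuous_comp; [exact: cvg_snd | exact: c2].
Qed.

Lemma Psi0_proto (R : realType) (X : normedModType R[i]) (F : algType R[i]) (E : set F)
  (Phi : F -> op X) : is_subalgebra E -> is_alg_hom_on E Phi -> F_anchored E Phi ->
  proto_calculus (Psi0 E Phi).
Proof.
move=> sub hom anc; have [s0 sD sZ sM] := sub; have [bd _ _ _] := hom.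
split.
- exact: Psi0_op.
- apply/seteqP; split => -[x y]; rewrite /Psi0 /op_id /=.
  + move=> H; apply/eqP; rewrite eq_sym -subr_eq0; apply/eqP.
    apply: (anch hom anc (g := 1)) => d Ed _; have b1 := bd _ Ed.
    by rewrite fnopB // -H ?mulr1 // subrr.
  + by move=> -> e Ee _; rewrite mulr1.
- move=> a f [x w]; rewrite /Psi0 /op_scale /= => -[y [H ->]] e Ee Eeaf.
  have [->|a0] := eqVneq a 0.
    have b0 := bd _ s0; have b1 := bd _ Ee.
    rewrite scale0r mulr0 -(scale0r (0 : F)) (phiZ sub hom) // !scale0r.
    by rewrite fnop0.
  have Eef : E (e * f).
    have -> : e * f = a^-1 *: (e * (a *: f)).
      by rewrite -scalerAr scalerA mulVf // scale1r.
    exact: sZ.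
  have b1 := bd _ Ee.
  by rewrite -scalerAr (phiZ sub hom) // H // fnopZ.
- move=> f g [x w]; rewrite /Psi0 /op_add /= => -[y [z [Hy [Hz ->]]]] e Ee Eefg.
  apply/eqP; rewrite -subr_eq0; apply/eqP.
  apply: (anch hom anc (g := e * f)) => d Ed Edef.
  have Ede : E (d * e) by apply: sM.
  have Edef' : E (d * e * f) by rewrite -mulrA.
  have Edefg : E (d * e * (f + g)) by rewrite -mulrA; apply: sM.
  have Edeg : E (d * e * g).
    have -> : d * e * g = d * e * (f + g) - d * e * f by rewrite mulrDr addrC addKr.
    exact: subE.
  have b1 := bd _ Ed; have b2 := bd _ Ee; have b3 := bd _ Ede.
  rewrite fnopB // -(phiM sub hom _ Ed Eefg) -(phiM sub hom _ Ed Ee) mulrA.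
  rewrite mulrDr (phiD sub hom) // Hy // Hz // fnopD //.
  by rewrite subrr.
- move=> f g; split.
  + move=> [x y]; rewrite /Psi0 /op_mul /= => -[z [Hz Hy]] e Ee Eefg.
    apply/eqP; rewrite -subr_eq0; apply/eqP.
    apply: (anch hom anc (g := e * f)) => d Ed Edef.
    have Ede : E (d * e) by apply: sM.
    have Edefg : E (d * (e * f) * g) by rewrite -!mulrA; apply: sM.
    have b1 := bd _ Ed; have b2 := bd _ Ee.
    rewrite fnopB // -(phiM sub hom _ Ed Eefg) -(phiM sub hom _ Ed Ee).
    have -> : d * (e * (f * g)) = d * (e * f) * g by rewrite !mulrA.
    rewrite Hz // mulrA Hy ?subrr //.
    by rewrite -mulrA.
  + apply/seteqP; split => x; rewrite /dom /Psi0 /op_mul /=.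
    * move=> [y [z [Hz Hy]]]; split; first by exists z.
      exists y => e Ee Eefg.
      apply/eqP; rewrite -subr_eq0; apply/eqP.
      apply: (anch hom anc (g := e * f)) => d Ed Edef.
      have Ede : E (d * e) by apply: sM.
      have Edefg : E (d * (e * f) * g) by rewrite -!mulrA; apply: sM.
      have b1 := bd _ Ed; have b2 := bd _ Ee.
      rewrite fnopB // -(phiM sub hom _ Ed Eefg) -(phiM sub hom _ Ed Ee).
      have -> : d * (e * (f * g)) = d * (e * f) * g by rewrite !mulrA.
      rewrite Hz // mulrA Hy ?subrr //.
      by rewrite -mulrA.
    * move=> [[z Hz] [y Hy]]; exists y, z; split => // e Ee Eef.
      apply/eqP; rewrite -subr_eq0; apply/eqP.
      apply: (anch hom anc (g := e * (f * g))) => d Ed Edefg.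
      have Ede : E (d * e) by apply: sM.
      have Edef : E (d * (e * f)) by apply: sM.
      have b1 := bd _ Ed.
      rewrite fnopB // -(phiM sub hom _ Ed Eef) -(phiM sub hom _ Ed Ee).
      have E1 : E (d * (e * f) * g) by rewrite -!mulrA.
      have E2 : E (d * e * (f * g)) by rewrite -!mulrA.
      rewrite -(Hz _ Edef E1) -(Hy _ Ede E2).
      by rewrite !mulrA subrr.
Qed.

Theorem theorem6p1 (R : realType) (X : completeNormedModType R[i])
    (F : algType R[i]) (E : set F) (Phi : F -> op X) :
  is_subalgebra E -> is_alg_hom_on E Phi -> F_anchored E Phi ->
  exists Psi : F -> op X,
    [/\ calculus Psi,
        (forall e, E e -> Psi e = Phi e)
      & (forall Psi' : F -> op X, calculus Psi' ->
           (forall e, E e -> Psi' e = Phi e) -> forall f, Psi' f = Psi f)].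
Proof.
move=> sub hom anc; have [s0 sD sZ sM] := sub; have [bd _ _ _] := hom.
have PsiE := Psi0_E sub hom anc.
have HPsi : forall g (x y : X), Psi0 E Phi g (x, y) -> forall c, E c -> E (c * g) ->
    fnop (Phi (c * g)) x = fnop (Phi c) y by move=> g x y H.
have HQ : forall Q : F -> op X, calculus Q -> (forall e, E e -> Q e = Phi e) ->
   forall g (x y : X), Q g (x, y) -> forall c, E c -> E (c * g) ->
    fnop (Phi (c * g)) x = fnop (Phi c) y.
  move=> Q [_ cal] agree g x y H c Ec Ecg.
  have rc : reg g Q c by split; rewrite /bdd /= agree //; exact: bd.
  have [z [H1 H2]] := (cal g x y).1 H c rc.
  rewrite agree // in H1; rewrite agree // in H2.
  by rewrite -(fnop_eq (bd _ Ecg) H1) -(fnop_eq (bd _ Ec) H2).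
exists (Psi0 E Phi); split.
- split; first exact: Psi0_proto.
  move=> f x y; split.
  + move=> H e He; exact: (calc_fwd sub hom anc HPsi H He).
  + move=> H; rewrite /Psi0 /= => c Ec Ecf.
    have rc : reg f (Psi0 E Phi) c by split; rewrite /bdd /= PsiE //; exact: bd.
    have [z [H1 H2]] := H c rc.
    rewrite PsiE // in H1; rewrite PsiE // in H2.
    by rewrite -(fnop_eq (bd _ Ecf) H1) -(fnop_eq (bd _ Ec) H2).
- exact: PsiE.
- move=> Psi' cal' agree f; have HQ' := HQ Psi' cal' agree.
  apply/seteqP; split => -[x y] H.
  + rewrite /Psi0 /= => c Ec Ecf; exact: HQ' H c Ec Ecf.
  + apply/(cal'.2 f x y) => e He; exact: (calc_fwd sub hom anc HQ' H He).
Qed.
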